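(* Let $k\ge1$, $n\ge 2k+1$ and let $\{x,y\}$ be a connector. Then $(x,f(x),y,f(y))$ is a $4$-cycle in the Kneser graph $K(n,k)$.
   Context: Vertices of $K(n,k)$ are identified with $X_{n,k}$, the binary strings of length $n$ with $k$ ones (characteristic vectors); two strings are adjacent iff they have no $1$ at a common position. Positions are cyclic mod $n$; $\sigma^i(z)$ denotes the cyclic right shift of $z$ by $i$ positions. Cyclic parenthesis matching: $1$s opening, $0$s closing brackets; each $1$ at position $i$ is matched to the last $0$ of the shortest cyclic substring starting at $i$ going right with equally many $0$s and $1$s (all $1$s get matched, $n-2k$ zeros are unmatched). $f(x)$ is $x$ with all matched bits complemented. A matched pair (a $1$ and the $0$ matched to it) is visible if it is not enclosed by another matched pair, i.e. there is no other matched pair whose cyclic interval from its $1$ to its $0$ contains both positions of the given pair. $D$ denotes the set of Dyck words (equally many $0$s and $1$s, at least as many $1$s as $0$s in every prefix, including the empty word). A connector is an unordered pair $\{x,y\}$ of strings in $X_{n,k}$ such that for some $i\ge0$, some $u,w\in D$ and some binary strings $p,q,r$, $x=\sigma^i(p\,1\,u\,0\,q\,0\,w\,0\,r)$ and $y=\sigma^i(p\,0\,u\,0\,q\,1\,w\,0\,r)$, where in $x$ the displayed $1$ and $0$ around $u$ are matched to each other and form a visible pair, and the two displayed $0$s around $w$ are unmatched in $x$. *)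

(* Defs.v *)
(* Binary strings are [seq bool] (true = 1, false = 0);
   positions are 0 .. size-1, taken cyclically (mod size). *)
From mathcomp Require Import all_boot.
Set Implicit Arguments. Unset Strict Implicit. Unset Printing Implicit Defensive.

Definition bit (x : seq bool) (t : nat) : bool := nth false x (t %% size x).

Definition inX (n k : nat) (x : seq bool) : bool :=
  (size x == n) && (count id x == k).

Definition kadj (a b : seq bool) : bool :=
  all (fun t => ~~ (nth false a t && nth false b t)) (iota 0 (size a)).

Definition four_cycle (n k : nat) (a b c d : seq bool) : Prop :=
  [/\ inX n k a, inX n k b, inX n k c & inX n k d] /\
  uniq [:: a; b; c; d] /\
  [/\ kadj a b, kadj b c, kadj c d & kadj d a].

Definition sigma (i : nat) (z : seq bool) : seq bool := rotr (i %% size z) z.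

Definition ones_from (x : seq bool) (i L : nat) : nat :=
  count id (map (fun t => bit x (i + t)) (iota 0 L)).

Definition balanced (x : seq bool) (i L : nat) : bool :=
  (ones_from x i L).*2 == L.

(* cyclic parenthesis matching: the 1 at position i is matched to the 0 at
   position j (both positions < size x) *)
Definition mpair (x : seq bool) (i j : nat) : bool :=
  [&& i < size x, j < size x, bit x i &
   has (fun L =>
     [&& j == (i + L - 1) %% size x, balanced x i L &
         all (fun L' => ~~ balanced x i L') (iota 1 L.-1)])
     (iota 1 (size x))].

Definition matched (x : seq bool) (j : nat) : bool :=
  has (fun i => mpair x i j || mpair x j i) (iota 0 (size x)).

Definition f (x : seq bool) : seq bool :=
  mkseq (fun j => if matched x j then ~~ nth false x j else nth false x j) (size x).

Definition in_cint (n a b p : nat) : bool :=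
  (p + n - a) %% n <= (b + n - a) %% n.

Definition visible (x : seq bool) (i j : nat) : bool :=
  mpair x i j &&
  ~~ has (fun i' => has (fun j' =>
        [&& mpair x i' j', (i', j') != (i, j),
            in_cint (size x) i' j' i & in_cint (size x) i' j' j])
        (iota 0 (size x))) (iota 0 (size x)).

Definition dyck (u : seq bool) : bool :=
  ((count id u).*2 == size u) &&
  all (fun t => count negb (take t u) <= count id (take t u)) (iota 0 (size u).+1).

Definition connector (x y : seq bool) : Prop :=
  exists (i : nat) (u w p q r : seq bool),
    [/\ dyck u, dyck w,
        x = sigma i (p ++ true :: u ++ false :: q ++ false :: w ++ false :: r),
        y = sigma i (p ++ false :: u ++ false :: q ++ true :: w ++ false :: r) &
        let n := size x in
        let a := size p in
        let b := a + 1 + size u in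
        let c := b + 1 + size q in
        let d := c + 1 + size w in
        [/\ visible x ((a + i) %% n) ((b + i) %% n),
            ~~ matched x ((c + i) %% n) &
            ~~ matched x ((d + i) %% n)]].

(* Main.v *)
Require Import Defs.
From mathcomp Require Import all_boot zify.
Set Implicit Arguments. Unset Strict Implicit. Unset Printing Implicit Defensive.

Lemma mod_ge e n : n <= e < n + n -> e %% n = e - n.
Proof.
move=> /andP[h1 h2]. have -> : e = (e - n) + n by lia.
rewrite modnDr modn_small; lia.
Qed.

Lemma bit_mod x t : bit x (t %% size x) = bit x t.
Proof. by rewrite /bit modn_mod. Qed.

Lemma bit_addn x t : bit x (t + size x) = bit x t.
Proof. by rewrite /bit modnDr. Qed.

Lemma bit_eqmod x s t : s = t %[mod size x] -> bit x s = bit x t.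
Proof. by rewrite /bit => ->. Qed.

Lemma bit_nth x t : t < size x -> bit x t = nth false x t.
Proof. by move=> h; rewrite /bit modn_small. Qed.

Lemma onesS x i L : ones_from x i L.+1 = ones_from x i L + bit x (i + L).
Proof.
by rewrite /ones_from -addn1 iotaD map_cat count_cat /= add0n addn0.
Qed.

Lemma ones1 x i : ones_from x i 1 = bit x i.
Proof. by rewrite onesS addn0. Qed.

Lemma onesD x i L1 L2 :
  ones_from x i (L1 + L2) = ones_from x i L1 + ones_from x (i + L1) L2.
Proof.
elim: L2 => [|L2 IH]; first by rewrite addn0 [ones_from _ _ 0]/ones_from /= addn0.
by rewrite addnS !onesS IH !addnA.
Qed.

Lemma ones_le x i L : ones_from x i L <= L.
Proof.
rewrite /ones_from. have := count_size id (map (fun t => bit x (i + t)) (iota 0 L)).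
by rewrite size_map size_iota.
Qed.

Lemma ones_eqmod x i j L : i = j %[mod size x] -> ones_from x i L = ones_from x j L.
Proof.
move=> h; rewrite /ones_from; congr count; apply: eq_map => t.
by apply: bit_eqmod; rewrite -modnDml h modnDml.
Qed.

Lemma ones_mod x i L : ones_from x (i %% size x) L = ones_from x i L.
Proof. by apply: ones_eqmod; rewrite modn_mod. Qed.

Lemma ones_ext x y i L :
  (forall t, t < L -> bit x (i + t) = bit y (i + t)) ->
  ones_from x i L = ones_from y i L.
Proof.
move=> h; rewrite /ones_from; congr count; apply/eq_in_map => t.
rewrite mem_iota add0n => /andP[_ ht]; exact: h.
Qed.

Lemma ones_full x i : ones_from x i (size x) = count id x.
Proof.
have h0 : ones_from x 0 (size x) = count id x.
  rewrite /ones_from.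
  have -> : map (fun t => bit x (0 + t)) (iota 0 (size x)) = map (nth false x) (iota 0 (size x)).
    apply/eq_in_map => t; rewrite mem_iota add0n => /andP[_ ht]; exact: bit_nth.
  by rewrite map_nth_iota0 // take_size.
have e1 := onesD x 0 i (size x).
have e2 := onesD x 0 (size x) i.
have e3 : ones_from x (0 + size x) i = ones_from x 0 i.
  by apply: ones_eqmod; rewrite add0n modnn mod0n.
rewrite addnC in e1. rewrite e1 add0n e3 in e2. rewrite -h0. lia.
Qed.

Lemma nth_rot (s : seq bool) r t : t < size s -> r <= size s ->
  nth false (rot r s) t = nth false s ((t + r) %% size s).
Proof.
move=> ht hr; rewrite /rot nth_cat size_drop.
case: ifP => h.
  rewrite nth_drop modn_small; [congr nth; lia | lia].
rewrite nth_take; last lia.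
rewrite mod_ge; [congr nth; lia | lia].
Qed.

Lemma bit_rot (s : seq bool) r t : r <= size s -> bit (rot r s) t = bit s (t + r).
Proof.
move=> hr. case: (posnP (size s)) => hs.
  by rewrite /bit size_rot hs !modn0 !nth_default ?size_rot ?hs.
rewrite /bit size_rot nth_rot ?ltn_mod //.
by rewrite modnDml.
Qed.

Lemma bit_sigma (z : seq bool) i t : bit (sigma i z) (t + i) = bit z t.
Proof.
rewrite /sigma. case: (posnP (size z)) => hs.
  by rewrite /bit size_rotr hs !modn0 !nth_default ?size_rotr ?hs.
have hm : i %% size z <= size z by rewrite ltnW // ltn_mod.
rewrite /rotr bit_rot; last lia.
apply: bit_eqmod. have Hi := divn_eq i (size z).
have hl : i %% size z < size z by rewrite ltn_mod.
have -> : t + i + (size z - i %% size z) = (i %/ size z).+1 * size z + t.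
  rewrite mulSn. move: Hi hl. generalize (i %/ size z * size z) (i %% size z) => a b. lia.
by rewrite modnMDl.
Qed.

Definition PP (x : seq bool) s L : Prop :=
  [/\ bit x s, 0 < L, (ones_from x s L).*2 = L &
      forall L', 0 < L' < L -> L' < (ones_from x s L').*2].

Lemma first_hit x s L : bit x s -> 0 < L -> (ones_from x s L).*2 <= L ->
  exists2 L0, L0 <= L & PP x s L0.
Proof.
move=> hb hL hle.
have ex : exists m, (0 < m) && ((ones_from x s m).*2 <= m) by exists L; rewrite hL hle.
case: (ex_minnP ex) => m /andP[hm0 hm] hmin.
exists m; first by apply: hmin; rewrite hL hle.
have h1 : ones_from x s 1 = 1 by rewrite ones1 hb.
have hpos : forall L', 0 < L' < m -> L' < (ones_from x s L').*2.
  move=> L' /andP[h0 hl]; rewrite ltnNge; apply/negP => hc.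
  have := hmin L'; rewrite h0 hc => /(_ isT); lia.
split=> //.
have m2 : 1 < m.
  case: m hm0 hm hmin hpos => [|[|m]] //. rewrite h1 //.
have := hpos m.-1; rewrite (ltn_predL) hm0 => /(_ _).
have := onesS x s m.-1; rewrite prednK //.
have := ones_le x s m. 
move=> _ e h; have {}h := h ltac:(lia).
have hb1 : bit x (s + m.-1) <= 1 by case: bit.
lia.
Qed.

Lemma mpairE x i j : mpair x i j ->
  [/\ i < size x, j < size x &
   exists L, [/\ 0 < L <= size x, PP x i L & j = (i + L - 1) %% size x]].
Proof.
case/and4P=> hi hj hb /hasP[L]; rewrite mem_iota => /andP[hL1 hL2].
case/and3P=> /eqP hj' hbal /allP hmin.
split=> //; exists L; split; [lia| |done].
split=> //; first by apply/eqP.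
move=> L' /andP[h0 hl]; rewrite ltnNge; apply/negP => hc.
have [L0 hL0 [_ hp0 hb0 _]] := first_hit hb h0 hc.
have := hmin L0; rewrite mem_iota /balanced hb0 eqxx => /(_ _) /=.
move=> H; have := H ltac:(lia). by [].
Qed.

Lemma PP_unique x s L1 L2 : PP x s L1 -> PP x s L2 -> L1 = L2.
Proof.
move=> [_ h1 e1 p1] [_ h2 e2 p2].
case: (ltngtP L1 L2) => // h.
  have := p2 L1; rewrite h1 h e1 => /(_ isT); lia.
have := p1 L2; rewrite h2 h e2 => /(_ isT); lia.
Qed.

Lemma PP_mpair x s L : 0 < L <= size x -> PP x s L ->
  mpair x (s %% size x) ((s + L - 1) %% size x).
Proof.
move=> /andP[hL0 hLn] [hb _ he hp].
have hn : 0 < size x by lia.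
apply/and4P; split; rewrite ?ltn_mod ?bit_mod //.
apply/hasP; exists L; first by rewrite mem_iota; lia.
apply/and3P; split.
- apply/eqP. have -> : s %% size x + L - 1 = s %% size x + (L - 1) by lia.
  have -> : s + L - 1 = s + (L - 1) by lia.
  by rewrite modnDml.
- by rewrite /balanced ones_mod he.
- apply/allP => L'; rewrite mem_iota /balanced ones_mod => hl.
  have := hp L' ltac:(lia). lia.
Qed.

Lemma mpair_bit0 x i j : mpair x i j -> bit x j = false.
Proof.
case/mpairE => hi hj [L [hL [hb hL0 he hp] ->]].
rewrite bit_mod.
have L2 : 1 < L. case: L hL0 he {hL hp} => [|[|L]] //. rewrite ones1 hb //.
have := hp L.-1 ltac:(lia). have := onesS x i L.-1. rewrite prednK; last lia.
have -> : i + L - 1 = i + L.-1 by lia.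
case: bit => //; lia.
Qed.

Lemma mpair_det x i j1 j2 : mpair x i j1 -> mpair x i j2 -> j1 = j2.
Proof.
case/mpairE => _ _ [L1 [_ p1 ->]]; case/mpairE => _ _ [L2 [_ p2 ->]].
by rewrite (PP_unique p1 p2).
Qed.

Lemma mpair_inj x i1 i2 j : mpair x i1 j -> mpair x i2 j -> i1 = i2.
Proof.
move=> m1 m2.
have key : forall i1 i2 L1 L2, i1 < size x -> i2 < size x -> 0 < L1 <= L2 -> L2 <= size x ->
   PP x i1 L1 -> PP x i2 L2 -> (i1 + L1 - 1) %% size x = (i2 + L2 - 1) %% size x -> i1 = i2.
  move=> a1 a2 L1 L2 ha1 ha2 /andP[hL1 hL12] hL2 p1 p2 e.
  have em : (a2 + (L2 - L1)) %% size x = a1 %% size x.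
    apply/eqP; rewrite -(eqn_modDr (L1 - 1)). apply/eqP.
    have -> : a2 + (L2 - L1) + (L1 - 1) = a2 + L2 - 1 by lia.
    have -> : a1 + (L1 - 1) = a1 + L1 - 1 by lia. by rewrite e.
  case: p2 => hb2 h20 he2 hp2.
  have := onesD x a2 (L2 - L1) L1. rewrite subnK // (ones_eqmod L1 em).
  case: p1 => _ _ he1 _.
  case: (posnP (L2 - L1)) => hd.
    move=> _. rewrite hd addn0 !modn_small // in em.
  move=> e2. have := hp2 (L2 - L1) ltac:(lia). lia.
case/mpairE: (m1) => h1 hj [L1 [hL1 p1 e1]].
case/mpairE: (m2) => h2 _ [L2 [hL2 p2 e2]].
case: (leqP L1 L2) => h.
  apply: (key i1 i2 L1 L2) => //; [lia | lia | by rewrite -e1 -e2].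
symmetry; apply: (key i2 i1 L2 L1) => //; [lia | lia | by rewrite -e1 -e2].
Qed.

Definition mz x j := has (fun i => mpair x i j) (iota 0 (size x)).

Lemma exists_match x i : (count id x).*2 < size x -> bit x i ->
  exists2 L, L <= size x & PP x i L.
Proof.
move=> hk hb; apply: first_hit => //; first lia.
rewrite ones_full; lia.
Qed.

Lemma mz_bit0 x j : mz x j -> bit x j = false.
Proof. by case/hasP=> i _ /mpair_bit0. Qed.

Lemma mzP x j : reflect (exists i, mpair x i j) (mz x j).
Proof.
apply: (iffP hasP) => [[i _ h]|[i h]]; first by exists i.
exists i => //; case/mpairE: h => hi _ _; rewrite mem_iota; lia.
Qed.

Lemma fbit x j : (count id x).*2 < size x -> j < size x ->
  (if matched x j then ~~ nth false x j else nth false x j) = mz x j.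
Proof.
move=> hk hj; rewrite -bit_nth //.
case hb: (bit x j).
  have [L hL hp] := exists_match hk hb.
  have hm : matched x j.
    apply/hasP; exists ((j + L - 1) %% size x).
      rewrite mem_iota ltn_mod; lia.
    have := PP_mpair (L := L) _ hp; rewrite modn_small // => ->; first by rewrite orbT.
    case: hp => _ h0 _ _; lia.
  rewrite hm /=. apply/esym/negP => /mz_bit0; by rewrite hb.
have -> : matched x j = mz x j.
  apply: eq_has => i /=. 
  have -> : mpair x j i = false.
    by apply/negbTE/negP => /and4P[_ _ h _]; rewrite hb in h.
  by rewrite orbF.
by case: mz.
Qed.

Lemma size_f x : size (f x) = size x.
Proof. by rewrite /f size_mkseq. Qed.

Lemma nth_f x j : (count id x).*2 < size x -> j < size x ->
  nth false (f x) j = mz x j.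
Proof. move=> hk hj; rewrite /f nth_mkseq //; exact: fbit. Qed.

Definition pm x i := nth 0 (iota 0 (size x)) (find (fun j => mpair x i j) (iota 0 (size x))).

Lemma pmP x i : (count id x).*2 < size x -> bit x i -> i < size x -> mpair x i (pm x i).
Proof.
move=> hk hb hi; rewrite /pm; apply: (nth_find 0 (a := fun j => mpair x i j)).
have [L hL hp] := exists_match hk hb.
apply/hasP; exists ((i + L - 1) %% size x); first by rewrite mem_iota ltn_mod; lia.
have := PP_mpair (L := L) _ hp; rewrite modn_small // => ->//.
case: hp => _ h0 _ _; lia.
Qed.

Lemma count_f x : (count id x).*2 < size x -> count id (f x) = count id x.
Proof.
move=> hk.
have e1 : count id (f x) = count (mz x) (iota 0 (size x)).
  rewrite /f /mkseq count_map; apply: eq_in_count => j; rewrite mem_iota add0n => /andP[_ hj].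
  exact: fbit.
have e2 : count id x = count (bit x) (iota 0 (size x)).
  rewrite -{1}(mkseq_nth false x) /mkseq count_map; apply: eq_in_count => j.
  rewrite mem_iota add0n => /andP[_ hj] /=; by rewrite bit_nth.
rewrite e1 e2 -!size_filter.
have Hu : uniq (map (pm x) (filter (bit x) (iota 0 (size x)))).
  rewrite map_inj_in_uniq ?filter_uniq ?iota_uniq // => i1 i2.
  rewrite !mem_filter !mem_iota !add0n => /andP[b1 h1] /andP[b2 h2] e.
  apply: (mpair_inj (j := pm x i1)); first exact: pmP.
  rewrite e; exact: pmP.
rewrite -[in RHS](size_map (pm x)); apply/esym/perm_size/uniq_perm => //.
  by rewrite filter_uniq ?iota_uniq.
move=> j; rewrite [in RHS]mem_filter; apply/mapP/andP.
  case=> i; rewrite mem_filter mem_iota add0n => /andP[bi hi] ->.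
  have m := pmP hk bi hi. split; first by apply/mzP; exists i.
  by case/mpairE: m => _ h _; rewrite mem_iota.
case=> /mzP[i m] _. case/mpairE: (m) => hi _ [L [_ [bi _ _ _] _]].
exists i; first by rewrite mem_filter mem_iota bi; lia.
apply: (mpair_det m); exact: pmP.
Qed.

Lemma kadjP a b : reflect (forall t, t < size a -> ~~ (nth false a t && nth false b t)) (kadj a b).
Proof.
apply: (iffP allP) => h t.
  move=> ht; apply: h; rewrite mem_iota; lia.
rewrite mem_iota add0n => /andP[_ ht]; exact: h.
Qed.

Lemma f_props n k x : inX n k x -> k.*2 < n ->
  [/\ inX n k (f x), kadj x (f x), kadj (f x) x &
      forall j, j < n -> nth false (f x) j = mz x j].
Proof.
case/andP=> /eqP hs /eqP hc hk. subst n k.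
have hn : forall j, j < size x -> nth false (f x) j = mz x j.
  move=> j hj; apply: nth_f => //.
split=> //.
- by rewrite /inX size_f eqxx count_f // eqxx.
- apply/kadjP => t ht; rewrite hn //; case hm: (mz x t); last by rewrite andbF.
  by rewrite -bit_nth // (mz_bit0 hm).
- apply/kadjP => t; rewrite size_f => ht; rewrite hn //; case hm: (mz x t) => //.
  by rewrite -bit_nth // (mz_bit0 hm).
Qed.

Lemma PP_eqmod x s1 s2 L : s1 = s2 %[mod size x] -> PP x s1 L -> PP x s2 L.
Proof.
move=> e [hb h0 he hp]; split=> //.
- by rewrite -(bit_eqmod e).
- by rewrite -(ones_eqmod L e).
- by move=> L' hL'; rewrite -(ones_eqmod L' e); apply: hp.
Qed.

Lemma Match0 x st L : bit x (st + L - 1) = false -> 0 < L <= size x ->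
  L <= (ones_from x st L).*2 -> matched x ((st + L - 1) %% size x).
Proof.
move=> hb0 /andP[hL0 hLn] hL.
pose W m := ones_from x (st + L - m) m.
have ex : exists m, (0 < m) && (m <= (W m).*2).
  by exists L; rewrite hL0 /W addnK hL.
case: (ex_minnP ex) => m /andP[hm0 hm] hmin.
have hmL : m <= L by apply: hmin; rewrite hL0 /W addnK hL.
have m2 : 1 < m.
  case: m hm0 hm hmin hmL => [|[|m]] //. rewrite /W ones1 hb0 //.
pose s0 := st + L - m.
have hsplit : forall L', L' <= m -> ones_from x s0 m = ones_from x s0 L' + W (m - L').
  move=> L' hL'; rewrite /W.
  have -> : st + L - (m - L') = s0 + L' by rewrite /s0; lia.
  by rewrite -onesD subnKC.
have hneg : forall m', 0 < m' < m -> (W m').*2 < m'.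
  move=> m' /andP[h0 h1]; rewrite ltnNge; apply/negP => hc.
  have := hmin m'; rewrite h0 hc => /(_ isT); lia.
have hWm : W m = ones_from x s0 m by [].
have e1 := hsplit 1 (ltnW m2). rewrite ones1 in e1.
have n1 := hneg (m - 1) ltac:(lia).
have hbs : bit x s0 by move: e1 n1 hm; rewrite hWm; case: bit => //; lia.
have pp : PP x s0 m.
  split=> //; first lia.
  - move=> L' /andP[h0 h1]. have := hsplit L' (ltnW h1).
    have := hneg (m - L') ltac:(lia). have := e1. move: n1 hm; rewrite hWm hbs /=. lia.
have := @PP_mpair x s0 m ltac:(lia) pp.
have -> : s0 + m - 1 = st + L - 1 by rewrite /s0; lia.
move=> mp; apply/hasP; exists (s0 %% size x); first by rewrite mem_iota ltn_mod; lia.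
by rewrite mp.
Qed.

Lemma offset A t n : A < n -> t < n -> exists2 o, o < n & t = (A + o) %% n.
Proof.
move=> hA ht; case: (leqP A t) => h.
  exists (t - A); first lia. rewrite modn_small; lia.
exists (t + n - A); first lia.
have -> : A + (t + n - A) = t + n by lia.
by rewrite modnDr modn_small.
Qed.

Lemma cint a t p n : a < n -> t < n -> (a + t) %% n = p -> (p + n - a) %% n = t.
Proof.
move=> ha ht e.
have hp : p < n by rewrite -e ltn_mod; lia.
apply/eqP; rewrite -(modn_small ht) -(eqn_modDr a).
have -> : p + n - a + a = p + n by lia.
by rewrite modnDr -e modn_mod addnC.
Qed.

Lemma len_back A s L n : A < n -> 0 < s < n -> 0 < L <= n ->
  ((A + s) %% n + L - 1) %% n = A -> L = n - s + 1.
Proof.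
move=> hA hs hL e.
have e2 : (A + (s + (L - 1))) %% n = (A + 0) %% n.
  rewrite addn0 (modn_small hA) -[in RHS]e. have -> : (A + s) %% n + L - 1 = (A + s) %% n + (L - 1) by lia.
  by rewrite modnDml addnA.
move/eqP: e2; rewrite eqn_modDl mod0n => /eqP e3.
case: (ltnP (s + (L - 1)) n) => h.
  rewrite modn_small in e3; lia.
rewrite mod_ge in e3; lia.
Qed.

Lemma neq_nth (a b : seq bool) t : nth false a t != nth false b t -> a != b.
Proof. by apply: contraNneq => ->. Qed.

Lemma bit_modn x t n : size x = n -> bit x (t %% n) = bit x t.
Proof. move=> <-; exact: bit_mod. Qed.

Lemma mz_matched x j : mz x j -> matched x j.
Proof.
case/mzP=> i m; apply/hasP; exists i; last by rewrite m.
case/mpairE: m => hi _ _; rewrite mem_iota; lia.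
Qed.


Ltac clean := repeat match goal with
 | H : is_true (bit _ _) |- _ => clear H
 | H : bit _ _ = _ |- _ => clear H
 | H : is_true (visible _ _ _) |- _ => clear H
 | H : is_true (~~ matched _ _) |- _ => clear H
 | H : is_true (inX _ _ _) |- _ => clear H
 | H : is_true (kadj _ _) |- _ => clear H
 | H : is_true (~~ mz _ _) |- _ => clear H
 | H : is_true (mpair _ _ _) |- _ => clear H
 | H : PP _ _ _ |- _ => clear H
 | H : forall _, _ |- _ => clear H
 end.
Ltac lia' := clean; lia.

Lemma core n k x y A lu lw oC oD :
  size x = n -> size y = n -> count id x = k -> count id y = k -> k.*2 < n -> A < n ->
  lu + 2 <= oC -> oD = oC + lw + 1 -> oD < n ->
  bit x A -> bit y A = false -> bit x (A + oC) = false -> bit y (A + oC) ->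
  (forall o, o < n -> o != 0 -> o != oC -> bit x (A + o) = bit y (A + o)) ->
  (forall t, t <= lu -> t <= (ones_from x (A + 1) t).*2) -> (ones_from x (A + 1) lu).*2 = lu ->
  bit x (A + (lu + 1)) = false ->
  (forall t, t <= lw -> t <= (ones_from y (A + oC + 1) t).*2) ->
  (ones_from y (A + oC + 1) lw).*2 = lw -> bit y (A + oD) = false ->
  visible x A ((A + (lu + 1)) %% n) ->
  ~~ matched x ((A + oC) %% n) -> ~~ matched x ((A + oD) %% n) ->
  four_cycle n k x (f x) y (f y).
Proof.
move=> hsx hsy hcx hcy hk hA hoC hoD hDn hxA hyA hxC hyC hag hxu hxu2 hxB hyw hyw2 hyD
  hvis hmC hmD.
have ix : inX n k x by rewrite /inX hsx hcx !eqxx.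
have iy : inX n k y by rewrite /inX hsy hcy !eqxx.
have [ifx kx1 kx2 nfx] := f_props ix hk.
have [ify ky1 ky2 nfy] := f_props iy hk.
have ppC : PP y (A + oC) (lw + 2).
  have e : forall t, ones_from y (A + oC) (1 + t) = 1 + ones_from y (A + oC + 1) t.
    by move=> t; rewrite onesD ones1 hyC.
  constructor.
  - exact: hyC.
  - lia'.
  - have e2 := e lw.+1. rewrite (_ : 1 + lw.+1 = lw + 2) in e2; last lia'.
    rewrite e2 onesS (_ : A + oC + 1 + lw = A + oD); last lia'.
    rewrite hyD addn0; lia'.
  - move=> L' /andP[h0 h1]; have -> : L' = 1 + (L' - 1) by lia'.
    rewrite e; have := hyw (L' - 1) ltac:(lia'); lia'.
have mCD : mpair y ((A + oC) %% n) ((A + oD) %% n).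
  have := @PP_mpair y (A + oC) (lw + 2) ltac:(lia') ppC.
  by rewrite hsy (_ : A + oC + (lw + 2) - 1 = A + oD); last lia'.
have nmC : ~~ mz x ((A + oC) %% n) by apply: contra hmC; exact: mz_matched.
have nmD : ~~ mz x ((A + oD) %% n) by apply: contra hmD; exact: mz_matched.
have nmA : ~~ mz y A.
  apply/negP => /mzP[i' m]. case/mpairE: m; rewrite hsy => hi' _ [L [hL pp eA]].
  have bi' : bit y i' by case: pp.
  have hne : i' != A by apply: contraTneq bi' => ->; rewrite hyA.
  have [s hs es] := offset hA hi'.
  have s0 : s != 0.
    apply: contraNneq hne => h0. by rewrite es h0 addn0 modn_small.
  have hL' := @len_back A s L n hA ltac:(lia') hL ltac:(by rewrite -es (esym eA)).
  subst L.
  have pp' : PP y (A + s) (n - s + 1) by apply: PP_eqmod pp; rewrite hsy es modn_mod.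
  case: pp' => bys _ he hp.
  case: (ltngtP s oC) => hsC.
  + have E1 : ones_from x (A + s) (oC - s) = ones_from y (A + s) (oC - s).
      apply: ones_ext => t ht; rewrite -!addnA; apply: hag; lia'.
    have E2 := hp (oC - s) ltac:(lia').
    have E3 : ones_from x (A + s) (oC - s + 1) = ones_from x (A + s) (oC - s).
      rewrite addn1 onesS (_ : A + s + (oC - s) = A + oC); last lia'.
      by rewrite hxC addn0.
    have := @Match0 x (A + s) (oC - s + 1).
    rewrite (_ : A + s + (oC - s + 1) - 1 = A + oC); last lia'.
    rewrite hxC hsx => /(_ erefl ltac:(lia') ltac:(lia')). by rewrite (negbTE hmC).
  + have hxs : bit x (A + s) by rewrite hag //; lia'.
    have Eq : forall t, t <= n - s -> ones_from x (A + s) t = ones_from y (A + s) t.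
      move=> t ht; apply: ones_ext => t' ht'; rewrite -!addnA; apply: hag; lia'.
    have hY : (ones_from y (A + s) (n - s)).*2 = n - s + 1.
      move: he; rewrite addn1 onesS (_ : A + s + (n - s) = A + size y); last lia'.
      by rewrite bit_addn hyA addn0.
    have hX1 : forall t, ones_from x (A + s) (n - s + (1 + t)) =
        ones_from y (A + s) (n - s) + 1 + ones_from x (A + 1) t.
      move=> t; rewrite onesD Eq // (_ : A + s + (n - s) = A + size x); last lia'.
      rewrite onesD ones1 bit_addn hxA.
      rewrite (@ones_eqmod x (A + size x + 1) (A + 1)); first by rewrite addnA.
      by rewrite addnAC modnDr.
    have hV : forall t, t <= lu + 1 -> t <= (ones_from x (A + 1) t).*2 + 1.
      move=> t ht; case: (leqP t lu) => h; first by have := hxu t h; lia'.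
      have -> : t = lu.+1 by lia'.
      rewrite onesS (_ : A + 1 + lu = A + (lu + 1)); last lia'.
      rewrite hxB addn0; lia'.
    have hposx : forall L', 0 < L' <= n - s + lu + 2 -> L' < (ones_from x (A + s) L').*2.
      move=> L' /andP[h0 h1]. case: (leqP L' (n - s)) => h2.
        rewrite Eq //; apply: hp; lia'.
      have -> : L' = n - s + (1 + (L' - (n - s) - 1)) by lia'.
      rewrite hX1; have := hV (L' - (n - s) - 1) ltac:(lia'). lia'.
    have [L2 hL2 pp2] := @exists_match x (A + s) ltac:(rewrite hcx hsx; lia') hxs.
    have hL2big : n - s + lu + 2 < L2.
      rewrite ltnNge; apply/negP => hc. case: pp2 => _ h0 he2 _.
      have := hposx L2 ltac:(lia'). lia'.
    have mp := @PP_mpair x (A + s) L2 ltac:(case: pp2 => *; lia') pp2.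
    rewrite hsx in mp.
    move: hvis; rewrite /visible => /andP[_ /negP]; apply.
    apply/hasP; exists ((A + s) %% n); first by rewrite mem_iota hsx ltn_mod; lia'.
    apply/hasP; exists ((A + s + L2 - 1) %% n); first by rewrite mem_iota hsx ltn_mod; lia'.
    rewrite mp /= hsx. apply/and3P; split.
    - apply/negP => /eqP [e1 _]. by rewrite es e1 eqxx in hne.
    - rewrite /in_cint.
      rewrite (@cint ((A + s) %% n) (n - s) A n) ?ltn_mod; [|lia'|lia'|].
      + rewrite (@cint ((A + s) %% n) (L2 - 1) _ n) ?ltn_mod; [lia'|lia'|lia'|].
        rewrite modnDml; congr (_ %% _). case: pp2 => *; lia'.
      + rewrite modnDml (_ : A + s + (n - s) = A + n); last lia'.
        by rewrite modnDr modn_small.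
    - rewrite /in_cint.
      rewrite (@cint ((A + s) %% n) (n - s + (lu + 1)) _ n) ?ltn_mod; [|lia'|lia'|].
      + rewrite (@cint ((A + s) %% n) (L2 - 1) _ n) ?ltn_mod; [lia'|lia'|lia'|].
        rewrite modnDml; congr (_ %% _). case: pp2 => *; lia'.
      + rewrite modnDml (_ : A + s + (n - s + (lu + 1)) = A + (lu + 1) + n); last lia'.
        by rewrite modnDr.
  + subst s. have := hp (lw + 2) ltac:(lia'). case: ppC => _ _ -> _. by rewrite ltnn.
have hC : (A + oC) %% n < n by rewrite ltn_mod; lia'.
have hD : (A + oD) %% n < n by rewrite ltn_mod; lia'.
have vxA : nth false x A = true by rewrite -bit_nth ?hsx.
have vyA : nth false y A = false by rewrite -bit_nth ?hsy.
have vfxA : nth false (f x) A = false.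
  by rewrite nfx //; apply/negP => /mz_bit0; rewrite hxA.
have vfyA : nth false (f y) A = false by rewrite nfy //; exact: negbTE nmA.
have vyC : nth false y ((A + oC) %% n) = true by rewrite -bit_nth ?hsy // (bit_modn _ hsy).
have vfxC : nth false (f x) ((A + oC) %% n) = false by rewrite nfx //; exact: negbTE nmC.
have vfyC : nth false (f y) ((A + oC) %% n) = false.
  by rewrite nfy //; apply/negP => /mz_bit0; rewrite (bit_modn _ hsy) hyC.
have vfxD : nth false (f x) ((A + oD) %% n) = false by rewrite nfx //; exact: negbTE nmD.
have vfyD : nth false (f y) ((A + oD) %% n) = true.
  by rewrite nfy //; apply/mzP; exists ((A + oC) %% n).
have kxy : kadj (f x) y.
  apply/kadjP => t; rewrite size_f hsx => ht. rewrite nfx //.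
  case hm: (mz x t) => //=.
  have [o ho et] := offset hA ht.
  rewrite -bit_nth ?hsy // et (bit_modn _ hsy).
  have bx : bit x (A + o) = false by rewrite -(bit_modn _ hsx) -et; exact: mz_bit0 hm.
  case: (eqVneq o 0) => [o0|o0]; first by subst o; rewrite addn0 hxA in bx.
  case: (eqVneq o oC) => [oc|oc]; first by subst o; rewrite et in hm; rewrite hm in nmC.
  by rewrite -hag // bx.
have kyx : kadj (f y) x.
  apply/kadjP => t; rewrite size_f hsy => ht. rewrite nfy //.
  case hm: (mz y t) => //=.
  have [o ho et] := offset hA ht.
  rewrite -bit_nth ?hsx // et (bit_modn _ hsx).
  have byy : bit y (A + o) = false by rewrite -(bit_modn _ hsy) -et; exact: mz_bit0 hm.
  case: (eqVneq o 0) => [o0|o0].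
    by subst o; rewrite et addn0 modn_small // in hm; rewrite hm in nmA.
  case: (eqVneq o oC) => [oc|oc]; first by subst o; rewrite hxC.
  by rewrite hag // byy.
have n1 : x != f x by apply: (neq_nth (t := A)); rewrite vxA vfxA.
have n2 : x != y by apply: (neq_nth (t := A)); rewrite vxA vyA.
have n3 : x != f y by apply: (neq_nth (t := A)); rewrite vxA vfyA.
have n4 : f x != y by apply: (neq_nth (t := (A + oC) %% n)); rewrite vfxC vyC.
have n5 : f x != f y by apply: (neq_nth (t := (A + oD) %% n)); rewrite vfxD vfyD.
have n6 : y != f y by apply: (neq_nth (t := (A + oC) %% n)); rewrite vyC vfyC.
split; first by split.
split; first by rewrite /= !inE !negb_or n1 n2 n3 n4 n5 n6.
by split.
Qed.

Lemma nth_skip (s1 s2 : seq bool) j : nth false (s1 ++ s2) (size s1 + j) = nth false s2 j.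
Proof. by rewrite nth_cat ltnNge leq_addr /= addKn. Qed.

Lemma nth_agree (p M R : seq bool) b1 b1' b2 b2' idx :
  idx != size p -> idx != size p + 1 + size M ->
  nth false (p ++ b1 :: M ++ b2 :: R) idx = nth false (p ++ b1' :: M ++ b2' :: R) idx.
Proof.
move=> h1 h2; rewrite !nth_cat; case: ifP => // hp.
have : idx - size p != 0 by lia.
case e: (idx - size p) => [|j] //= _.
rewrite !nth_cat; case: ifP => // hM.
have : j - size M != 0 by lia.
by case: (j - size M).
Qed.

Lemma dyck_total u : dyck u -> (count id u).*2 = size u.
Proof. by case/andP => /eqP. Qed.

Lemma dyck_prefix u t : dyck u -> t <= size u -> t <= (count id (take t u)).*2.
Proof.
case/andP => _ /allP h ht.
have := h t; rewrite mem_iota add0n ltnS ht => /(_ isT).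
have := count_predC id (take t u).
rewrite size_take_min (minn_idPl ht).
have -> : count (predC id) (take t u) = count negb (take t u) by apply: eq_count.
lia.
Qed.

Lemma ones_seg x st (u : seq bool) t :
  (forall o, o < size u -> bit x (st + o) = nth false u o) -> t <= size u ->
  ones_from x st t = count id (take t u).
Proof.
move=> h ht; rewrite /ones_from -(map_nth_iota0 false) //; congr count.
apply/eq_in_map => o; rewrite mem_iota add0n => /andP[_ ho]; apply: h; lia.
Qed.

Lemma from_connector n k x y : inX n k x -> inX n k y -> k.*2 < n ->
  connector x y -> four_cycle n k x (f x) y (f y).
Proof.
move=> ix iy hk [i [u [w [p [q [r [du dw ex ey hc]]]]]]].
move: hc => /= [hvis hmC hmD].
case/andP: (ix) => /eqP hsx /eqP hcx; case/andP: (iy) => /eqP hsy /eqP hcy.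
set z := p ++ true :: u ++ false :: q ++ false :: w ++ false :: r in ex.
set z' := p ++ false :: u ++ false :: q ++ true :: w ++ false :: r in ey.
have hz : size z = n by rewrite -hsx ex /sigma size_rotr.
have hz' : size z' = n by rewrite -hsy ey /sigma size_rotr.
have hn : n = size p + size u + size q + size w + size r + 4.
  by rewrite -hz /z size_cat /= size_cat /= size_cat /= size_cat /=; lia'.
have bx : forall o, bit x ((size p + i) %% n + o) = bit z (size p + o).
  move=> o; rewrite -(bit_sigma z i (size p + o)) -ex; apply: bit_eqmod.
  by rewrite hsx modnDml addnAC.
have by' : forall o, bit y ((size p + i) %% n + o) = bit z' (size p + o).
  move=> o; rewrite -(bit_sigma z' i (size p + o)) -ey; apply: bit_eqmod.
  by rewrite hsy modnDml addnAC.
have nz : forall o, size p + o < n -> bit z (size p + o) = nth false z (size p + o).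
  by move=> o h; rewrite bit_nth // hz.
have nz' : forall o, size p + o < n -> bit z' (size p + o) = nth false z' (size p + o).
  by move=> o h; rewrite bit_nth // hz'.
have ez : z = p ++ true :: (u ++ false :: q) ++ false :: (w ++ false :: r) by rewrite /z -catA.
have ez' : z' = p ++ false :: (u ++ false :: q) ++ true :: (w ++ false :: r) by rewrite /z' -catA.
have hnpos : 0 < n by lia'.
apply: (@core n k x y ((size p + i) %% n) (size u) (size w)
          (size u + size q + 2) (size u + size q + size w + 3)) => //.
- by rewrite ltn_mod.
- lia'.
- lia'.
- lia'.
- rewrite -(addn0 ((size p + i) %% n)) bx nz; last lia'. by rewrite /z nth_skip.
- rewrite -(addn0 ((size p + i) %% n)) by' nz'; last lia'. by rewrite /z' nth_skip.
- rewrite bx nz; last lia'. rewrite ez nth_skip /= (_ : size u + size q + 2 = (size (u ++ false :: q) + 0).+1).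
    by rewrite /= nth_skip.
  by rewrite size_cat /=; lia'.
- rewrite by' nz'; last lia'. rewrite ez' nth_skip /= (_ : size u + size q + 2 = (size (u ++ false :: q) + 0).+1).
    by rewrite /= nth_skip.
  by rewrite size_cat /=; lia'.
- move=> o ho o0 oC. rewrite bx by'.
  rewrite -(bit_modn _ hz) -(bit_modn _ hz') bit_nth ?hz ?ltn_mod // bit_nth ?hz' ?ltn_mod //.
  rewrite ez ez'; apply: nth_agree; rewrite ?size_cat /=.
    case: (ltnP (size p + o) n) => h; [rewrite modn_small // | rewrite mod_ge]; lia'.
  case: (ltnP (size p + o) n) => h; [rewrite modn_small // | rewrite mod_ge]; lia'.
- move=> t ht. rewrite (@ones_seg x _ u) //.
    exact: dyck_prefix.
  move=> o hoo; rewrite -addnA bx nz; last lia'.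
  by rewrite /z nth_skip add1n /= nth_cat hoo.
- rewrite (@ones_seg x _ u) // ?take_size ?dyck_total //.
  move=> o hoo; rewrite -addnA bx nz; last lia'.
  by rewrite /z nth_skip add1n /= nth_cat hoo.
- rewrite bx nz; last lia'. by rewrite /z nth_skip addn1 /= -[size u]addn0 nth_skip.
- move=> t ht. rewrite (@ones_seg y _ w) //.
    exact: dyck_prefix.
  move=> o hoo; rewrite -!addnA by' nz'; last lia'.
  rewrite ez' nth_skip (_ : size u + (size q + (2 + (1 + o))) = (size (u ++ false :: q) + o.+1).+1).
    by rewrite /= nth_skip /= nth_cat hoo.
  by rewrite size_cat /=; lia'.
- rewrite (@ones_seg y _ w) // ?take_size ?dyck_total //.
  move=> o hoo; rewrite -!addnA by' nz'; last lia'.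
  rewrite ez' nth_skip (_ : size u + (size q + (2 + (1 + o))) = (size (u ++ false :: q) + o.+1).+1).
    by rewrite /= nth_skip /= nth_cat hoo.
  by rewrite size_cat /=; lia'.
- rewrite by' nz'; last lia'.
  rewrite ez' nth_skip (_ : size u + size q + size w + 3 = (size (u ++ false :: q) + (size w + 0).+1).+1).
    by rewrite /= nth_skip /= nth_skip.
  by rewrite size_cat /=; lia'.
- move: hvis; rewrite hsx; congr visible.
  by rewrite modnDml; congr (_ %% _); lia'.
- move: hmC; rewrite hsx; congr (~~ matched _ _).
  by rewrite modnDml; congr (_ %% _); lia'.
- move: hmD; rewrite hsx; congr (~~ matched _ _).
  by rewrite modnDml; congr (_ %% _); lia'.
Qed.

Theorem mainTheorem11 (n k : nat) (x y : seq bool) :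
  1 <= k -> 2 * k + 1 <= n ->
  inX n k x -> inX n k y ->
  connector x y \/ connector y x ->
  four_cycle n k x (f x) y (f y).
Proof.
move=> _ hn ix iy hk'.
have hk : k.*2 < n by rewrite -muln2; lia.
case: hk' => c; first exact: from_connector.
have [[a1 a2 a3 a4] [hu [b1 b2 b3 b4]]] := from_connector iy ix hk c.
split; first by split.
split; last by split.
by rewrite -(rot_uniq 2).
Qed.
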